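(* Let $F$ be a field of characteristic zero and let $A$ be a $\#$-superalgebra over $F$. Then for every $n\geq 1$, $$c_n^{grs}(A)\leq 4^n c_n(A).$$
   Context: All algebras are associative over $F$. A superalgebra is $A=A_0\oplus A_1$ with $A_iA_j\subseteq A_{(i+j)\bmod 2}$; $\deg a=i$ for $0\ne a\in A_i$. A superinvolution is an $F$-linear map $\#:A\to A$ with $A_i^\#\subseteq A_i$, $(c^\#)^\#=c$ and $(ab)^\#=(-1)^{\deg a\deg b}b^\#a^\#$ for homogeneous $a,b$; a graded involution is an $F$-linear map $\#$ with $A_i^\#\subseteq A_i$, $(c^\#)^\#=c$, $(ab)^\#=b^\#a^\#$. A $\#$-superalgebra is a superalgebra with a superinvolution or a graded involution $\#$. Put $A_i^{+}=\{a\in A_i:a^\#=a\}$, $A_i^-=\{a\in A_i:a^\#=-a\}$. Let $\mathcal F$ be the free non-unital associative algebra on $X=Y_0\cup Z_0\cup Y_1\cup Z_1$, $Y_i=\{y_{i,1},y_{i,2},\dots\}$, $Z_i=\{z_{i,1},z_{i,2},\dots\}$, where variables in $Y_i\cup Z_i$ have $\mathbb Z_2$-degree $i$, and $\#$ is defined by $y_{i,j}^\#=y_{i,j}$, $z_{i,j}^\#=-z_{i,j}$ and, on monomials, $(x_{i_1}\cdots x_{i_k})^\#=(-1)^{s(s-1)/2}x_{i_k}^\#\cdots x_{i_1}^\#$ ($s$ = number of odd variables) in the superinvolution case, resp. $(x_{i_1}\cdots x_{i_k})^\#=x_{i_k}^\#\cdots x_{i_1}^\#$ in the graded involution case, extended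 linearly. A polynomial $f\in\mathcal F$ is a $\#$-superidentity of $A$ if it vanishes under every substitution of variables $y_{0,j},z_{0,j},y_{1,j},z_{1,j}$ by elements of $A_0^+,A_0^-,A_1^+,A_1^-$ respectively; $Id_2^\#(A)$ is the set of these. $P_n^{grs}$ is the span of all monomials $w_{\sigma(1)}\cdots w_{\sigma(n)}$, $\sigma\in S_n$, $w_i\in\{y_{0,i},z_{0,i},y_{1,i},z_{1,i}\}$, and $c_n^{grs}(A)=\dim P_n^{grs}/(P_n^{grs}\cap Id_2^\#(A))$. $P_n$ is the space of ordinary multilinear polynomials in $x_1,\dots,x_n$, $Id(A)$ the ordinary polynomial identities of $A$, and $c_n(A)=\dim P_n/(P_n\cap Id(A))$. *)

(* Defs.v *)
From HB Require Import structures.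
From mathcomp Require Import all_boot all_order all_algebra all_fingroup.
From mathcomp Require Import boolp.
Set Implicit Arguments. Unset Strict Implicit. Unset Printing Implicit Defensive.
Import Order.TTheory GRing.Theory Num.Theory.
Local Open Scope ring_scope.

Section Defs.
Variable F : fieldType.

(* quotient dimension dim (V / W) where V = functions I -> F (finite basis I,
   so V = F^I) and W is a subspace given as a predicate:
   the largest m such that there are m vectors of V linearly independent
   modulo W. *)
Definition indep_mod (I : finType) (W : (I -> F) -> Prop) (m : nat) : Prop :=
  exists v : 'I_m -> I -> F,
    forall c : 'I_m -> F,
      W (fun x => \sum_(i < m) c i * v i x) -> forall i, c i = 0.

Definition quot_dim (I : finType) (W : (I -> F) -> Prop) : nat :=
  (\max_(m < #|I|.+1 | `[< indep_mod W m >]) nat_of_ord m)%N.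

Variable A : lmodType F.

Definition is_assoc_algebra (mul : A -> A -> A) : Prop :=
  [/\ forall (k : F) a b c, mul (k *: a + b) c = k *: mul a c + mul b c,
      forall (k : F) a b c, mul a (k *: b + c) = k *: mul a b + mul a c
    & forall a b c, mul a (mul b c) = mul (mul a b) c].

Fixpoint mprod (mul : A -> A -> A) (s : seq A) : A :=
  match s with
  | [::] => 0
  | [:: a] => a
  | a :: t => mul a (mprod mul t)
  end.

Definition subspace (P : A -> Prop) : Prop :=
  P 0 /\ forall (k : F) a b, P a -> P b -> P (k *: a + b).

Definition comp (A0 A1 : A -> Prop) (i : bool) : A -> Prop :=
  if i then A1 else A0.

(* A = A_0 (+) A_1 is a superalgebra; sh is a superinvolution (super = true)
   or a graded involution (super = false). *)
Definition is_sharp_superalgebra (mul : A -> A -> A) (A0 A1 : A -> Prop)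
    (sh : A -> A) (super : bool) : Prop :=
  [/\ is_assoc_algebra mul,
      subspace A0 /\ subspace A1 /\
      ((forall a, exists a0 a1, [/\ A0 a0, A1 a1 & a = a0 + a1]) /\
      (forall a, A0 a -> A1 a -> a = 0)),
      (forall i j a b, comp A0 A1 i a -> comp A0 A1 j b ->
                       comp A0 A1 (i (+) j) (mul a b)),
      (forall (k : F) a b, sh (k *: a + b) = k *: sh a + sh b) /\
      (forall i a, comp A0 A1 i a -> comp A0 A1 i (sh a)) /\
      (forall a, sh (sh a) = a)
    & if super then
        forall i j a b, comp A0 A1 i a -> comp A0 A1 j b ->
          sh (mul a b) = (-1) ^+ (i && j) *: mul (sh b) (sh a)
      else forall a b, sh (mul a b) = mul (sh b) (sh a)].

(* ordinary multilinear polynomials: f = sum_s f(s) x_{s(0)} ... x_{s(n-1)} *)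
Definition eval_P (n : nat) (mul : A -> A -> A) (f : 'S_n -> F)
    (x : 'I_n -> A) : A :=
  \sum_(s : 'S_n) f s *: mprod mul [seq x (s i) | i <- enum 'I_n].

Definition is_id_P (n : nat) (mul : A -> A -> A) (f : 'S_n -> F) : Prop :=
  forall x : 'I_n -> A, eval_P mul f x = 0.

Definition codim (n : nat) (mul : A -> A -> A) : nat :=
  quot_dim (fun f : 'S_n -> F => is_id_P mul f).

(* graded-involution/super variables: kind 0 = y_0 (A_0^+), 1 = z_0 (A_0^-),
   2 = y_1 (A_1^+), 3 = z_1 (A_1^-). *)
Definition kind_set (A0 A1 : A -> Prop) (sh : A -> A) (k : 'I_4) : A -> Prop :=
  fun a => (if (k < 2)%N then A0 a else A1 a) /\
           sh a = (if odd k then - a else a).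

(* P_n^grs: basis monomials w_{s(0)} ... w_{s(n-1)} indexed by (s, t) with
   w_i the variable of kind t(i) and index i. *)
Definition grs_index (n : nat) := ('S_n * {ffun 'I_n -> 'I_4})%type.

Definition eval_Pgrs (n : nat) (mul : A -> A -> A) (f : grs_index n -> F)
    (x : 'I_4 -> 'I_n -> A) : A :=
  \sum_(p : grs_index n)
     f p *: mprod mul [seq x (p.2 (p.1 i)) (p.1 i) | i <- enum 'I_n].

Definition is_id_Pgrs (n : nat) (mul : A -> A -> A) (A0 A1 : A -> Prop)
    (sh : A -> A) (f : grs_index n -> F) : Prop :=
  forall x : 'I_4 -> 'I_n -> A,
    (forall k i, kind_set A0 A1 sh k (x k i)) -> eval_Pgrs mul f x = 0.

Definition codim_grs (n : nat) (mul : A -> A -> A) (A0 A1 : A -> Prop)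
    (sh : A -> A) : nat :=
  quot_dim (fun f : grs_index n -> F => is_id_Pgrs mul A0 A1 sh f).

End Defs.

(* Main.v *)
Require Import Defs.
From HB Require Import structures.
From mathcomp Require Import all_boot all_order all_algebra all_fingroup.
From mathcomp Require Import boolp.
Import GRing.Theory.
Set Implicit Arguments. Unset Strict Implicit. Unset Printing Implicit Defensive.
Local Open Scope ring_scope.

Section Aux.
Variable F : fieldType.

Definition linW (I : finType) (W : (I -> F) -> Prop) :=
  forall (J : finType) (c : J -> F) (f : J -> I -> F),
    (forall j, W (f j)) -> W (fun x => \sum_(j : J) c j * f j x).

Lemma ker_exists (m k : nat) (M : 'M[F]_(m, k)) :
  (k < m)%N -> exists c : 'rV_m, c != 0 /\ c *m M = 0.
Proof.
move=> lt_km.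
have : kermx M != 0.
  rewrite kermx_eq0 /row_free; apply/negP => /eqP E.
  by move: (rank_leq_col M); rewrite E leqNgt lt_km.
case/rowV0Pn => v /sub_kermxP Hv nz; by exists v.
Qed.

Lemma span_bound (I J : finType) (W : (I -> F) -> Prop) (w : J -> I -> F)
  (coef : (I -> F) -> J -> F) (m : nat) :
  linW W ->
  (forall f, W (fun x => f x - \sum_j coef f j * w j x)) ->
  indep_mod W m -> (m <= #|J|)%N.
Proof.
move=> LW Hs [v Hv]; rewrite leqNgt; apply/negP => Hlt.
pose M : 'M[F]_(m, #|J|) := \matrix_(i, j) coef (v i) (enum_val j).
have [c [nzc cM]] := ker_exists M Hlt.
have HW : W (fun x => \sum_i c ord0 i * v i x).
  have := LW _ (fun i => c ord0 i) _ (fun i => Hs (v i)).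
  congr W; apply: funext => x.
  under eq_bigr => i _ do rewrite mulrBr.
  rewrite sumrB.
  have -> : \sum_i c ord0 i * (\sum_j coef (v i) j * w j x) = 0.
    under eq_bigr => i _ do rewrite mulr_sumr.
    rewrite exchange_big /= big1 // => j _.
    under eq_bigr => i _ do rewrite mulrA.
    rewrite -mulr_suml.
    have -> : \sum_i c ord0 i * coef (v i) j = (c *m M) ord0 (enum_rank j).
      by rewrite mxE; apply: eq_bigr => i _; rewrite mxE enum_rankK.
    by rewrite cM mxE mul0r.
  by rewrite subr0.
have := Hv _ HW => H0.
by move/eqP: nzc; apply; apply/rowP => i; rewrite !mxE; exact: H0.
Qed.

Lemma linW0 (I : finType) (W : (I -> F) -> Prop) : linW W -> W (fun _ => 0).
Proof.
move=> LW; have := LW 'I_0 (fun _ => 0) (fun _ _ => 0) (fun j => match j with Ordinal _ h => False_ind _ (notF h) end).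
by congr W; apply: funext => x; rewrite big_ord0.
Qed.

Lemma indep_le_card (I : finType) (W : (I -> F) -> Prop) m :
  linW W -> indep_mod W m -> (m <= #|I|)%N.
Proof.
move=> LW; apply: (@span_bound I I W (fun j x => (j == x)%:R) (fun f j => f j)) => // f.
have := linW0 LW; congr W; apply: funext => x.
rewrite (bigD1 x) //= eqxx mulr1 big1 ?addr0 ?subrr // => j /negbTE ->.
by rewrite mulr0.
Qed.

Lemma basis_of_max (I : finType) (W : (I -> F) -> Prop) c (u : 'I_c -> I -> F) :
  linW W ->
  (forall a : 'I_c -> F, W (fun x => \sum_j a j * u j x) -> forall j, a j = 0) ->
  ~ indep_mod W (c + 1) ->
  forall f, exists a : 'I_c -> F, W (fun x => f x - \sum_j a j * u j x).
Proof.
move=> LW Hu Hn f.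
pose v' := fun i : 'I_(c + 1) => match split i with inl j => u j | inr _ => f end.
have [c' [H1 H2]] : exists c' : 'I_(c+1) -> F,
    W (fun x => \sum_i c' i * v' i x) /\ exists i, c' i != 0.
  apply: contrapT => Hc; apply: Hn; exists v' => c' Hw i.
  apply/eqP; apply: contrapT => Hi; apply: Hc; exists c'; split => //.
  by exists i; apply/negP.
have Ev : forall x, \sum_i c' i * v' i x =
    \sum_j c' (lshift 1 j) * u j x + c' (rshift c ord0) * f x.
  move=> x; rewrite big_split_ord /= big_ord1; congr (_ + _).
    by apply: eq_bigr => j _; rewrite /v' (unsplitK (inl _ j)).
  by rewrite /v' (unsplitK (inr _ ord0)).
set b := c' (rshift c ord0) in Ev.
have [b0|bn0] := eqVneq b 0.
  have HW : W (fun x => \sum_j c' (lshift 1 j) * u j x).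
    by move: H1; congr W; apply: funext => x; rewrite Ev b0 mul0r addr0.
  have Hz := Hu _ HW.
  case: H2 => i; case: (splitP i) => [j|k] Ei.
    have -> : i = lshift 1 j by apply: val_inj.
    by rewrite Hz eqxx.
  have -> : i = rshift c ord0 by apply: val_inj; rewrite /= Ei ord1 addn0.
  by rewrite -/b b0 eqxx.
exists (fun j => - (c' (lshift 1 j) / b)).
have := LW 'I_1 (fun _ => b^-1) (fun _ => fun x => \sum_i c' i * v' i x) (fun _ => H1).
congr W; apply: funext => x; rewrite big_ord1 Ev mulrDr mulrA mulVf // mul1r.
rewrite addrC; under [X in _ - X]eq_bigr => j _ do rewrite mulNr.
rewrite sumrN opprK mulr_sumr; congr (_ + _); apply: eq_bigr => j _.
by rewrite mulrA [b^-1 * _]mulrC.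
Qed.

Lemma quot_basis (I : finType) (W : (I -> F) -> Prop) :
  linW W ->
  exists u : 'I_(quot_dim W) -> I -> F,
    (forall a : 'I_(quot_dim W) -> F, W (fun x => \sum_j a j * u j x) -> forall j, a j = 0) /\
    forall f, exists a : 'I_(quot_dim W) -> F, W (fun x => f x - \sum_j a j * u j x).
Proof.
move=> LW.
have P0 : (0 < #|[pred m : 'I_#|I|.+1 | `[< indep_mod W m >]]|)%N.
  apply/card_gt0P; exists ord0; rewrite inE; apply/asboolP.
  by exists (fun _ _ => 0) => c _ [].
have [m0 Hm0 Eq] := eq_bigmax_cond (fun m : 'I_#|I|.+1 => nat_of_ord m) P0.
have Hmax : forall k, indep_mod W k -> (k <= quot_dim W)%N.
  move=> k Hk; have Hle := indep_le_card LW Hk.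
  have := @leq_bigmax_cond _ (fun m : 'I_#|I|.+1 => `[< indep_mod W m >])
            (fun m => nat_of_ord m) (Ordinal (Hle : (k < #|I|.+1)%N)).
  by rewrite /quot_dim; apply; apply/asboolP.
have Eq' : quot_dim W = m0 by [].
move: Hmax; rewrite Eq' => Hmax.
rewrite inE in Hm0; move/asboolP: Hm0 => [u Hu].
exists u; split => //; apply: basis_of_max => // Hn.
by have := Hmax _ Hn; rewrite addn1 ltnn.
Qed.

End Aux.

Section Main.
Variable F : fieldType.
Variable A : lmodType F.
Variable mul : A -> A -> A.

Lemma eval_P_lin n (J : finType) (c : J -> F) (f : J -> 'S_n -> F) x :
  eval_P mul (fun s => \sum_j c j * f j s) x = \sum_j c j *: eval_P mul (f j) x.
Proof.
rewrite /eval_P; under eq_bigr => s _ do rewrite scaler_suml.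
rewrite exchange_big; apply: eq_bigr => j _; rewrite scaler_sumr.
by apply: eq_bigr => s _; rewrite scalerA.
Qed.

Lemma eval_Pgrs_lin n (J : finType) (c : J -> F) (f : J -> grs_index n -> F) x :
  eval_Pgrs mul (fun s => \sum_j c j * f j s) x = \sum_j c j *: eval_Pgrs mul (f j) x.
Proof.
rewrite /eval_Pgrs; under eq_bigr => s _ do rewrite scaler_suml.
rewrite exchange_big; apply: eq_bigr => j _; rewrite scaler_sumr.
by apply: eq_bigr => s _; rewrite scalerA.
Qed.

Lemma linW_P n : linW (fun f : 'S_n -> F => is_id_P mul f).
Proof.
move=> J c f Hf x; rewrite eval_P_lin big1 // => j _.
by rewrite Hf scaler0.
Qed.

Lemma linW_Pgrs n A0 A1 sh :
  linW (fun f : grs_index n -> F => is_id_Pgrs mul A0 A1 sh f).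
Proof.
move=> J c f Hf x Hx; rewrite eval_Pgrs_lin big1 // => j _.
by rewrite Hf // scaler0.
Qed.

Definition phi n (t : {ffun 'I_n -> 'I_4}) (g : 'S_n -> F) : grs_index n -> F :=
  fun p => if p.2 == t then g p.1 else 0.

Lemma key n A0 A1 sh t (g : 'S_n -> F) :
  is_id_P mul g -> is_id_Pgrs mul A0 A1 sh (phi t g).
Proof.
move=> Hg x _.
rewrite -(Hg (fun j => x (t j) j)) /eval_Pgrs /eval_P.
transitivity (\sum_(s : 'S_n) \sum_(t' : {ffun 'I_n -> 'I_4})
   phi t g (s, t') *: mprod mul [seq x (t' (s i)) (s i) | i <- enum 'I_n]).
  by rewrite pair_bigA; apply: eq_bigr => -[? ?].
apply: eq_bigr => s _.
rewrite (bigD1 t) //= big1 ?addr0; first by rewrite /phi /= eqxx.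
by move=> t' /negbTE ne; rewrite /phi /= ne scale0r.
Qed.

End Main.

Theorem lemma2p2 (F : fieldType) (A : lmodType F) (mul : A -> A -> A)
    (A0 A1 : A -> Prop) (sh : A -> A) (super : bool) :
  [pchar F] =i pred0 ->
  is_sharp_superalgebra mul A0 A1 sh super ->
  forall n : nat, (1 <= n)%N ->
    (codim_grs n mul A0 A1 sh <= 4 ^ n * codim n mul)%N.
Proof.
move=> _ _ n _.
rewrite /codim /codim_grs.
have LWp := @linW_P F A mul n.
have LWg := @linW_Pgrs F A mul n A0 A1 sh.
have [u [Hu Hspan]] := quot_basis LWp.
set c := quot_dim _ in u Hu Hspan *.
case: (choice Hspan) => Acoef HA.
pose T := {ffun 'I_n -> 'I_4}.
pose w : (T * 'I_c)%type -> grs_index n -> F :=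
  fun q p => if p.2 == q.1 then u q.2 p.1 else 0.
pose coef := fun (f : grs_index n -> F) (q : (T * 'I_c)%type) =>
  Acoef (fun s => f (s, q.1)) q.2.
have Hs : forall f, is_id_Pgrs mul A0 A1 sh (fun x => f x - \sum_q coef f q * w q x).
  move=> f.
  have := LWg T (fun _ => 1) (fun t => phi t (fun s => f (s, t) - \sum_j Acoef (fun s => f (s, t)) j * u j s))
     (fun t => @key F A mul n A0 A1 sh t _ (HA (fun s => f (s, t)))).
  congr is_id_Pgrs; apply: funext => -[s t'].
  rewrite (bigD1 t') //= big1 ?addr0; last first.
    by move=> t /negbTE ne; rewrite /phi /= eq_sym ne mulr0.
  rewrite /phi /= eqxx mul1r; congr (_ - _).
  rewrite -(pair_bigA _ (fun (t : T) (j : 'I_c) => coef f (t, j) * w (t, j) (s, t'))) /=.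
  rewrite [RHS](bigD1 t') //= [X in _ + X]big1 ?addr0; last first.
    move=> t /negbTE ne; apply: big1 => j _.
    by rewrite /w /= eq_sym ne mulr0.
  by apply: eq_bigr => j _; rewrite /w /coef /= eqxx.
apply/bigmax_leqP => m /asboolP Hm.
apply: leq_trans (span_bound LWg Hs Hm) _.
by rewrite card_prod card_ffun !card_ord.
Qed.
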